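(* Let $\mathbf{Dt},\mathbf{Da}$ be types with $\mathrm{op}:\mathrm{opsym}\to(\mathrm{index},\mathbf{Dt})\mathrm{input}\to(\mathrm{bindex},\mathbf{Da})\mathrm{input}\to\mathbf{Dt}$ and $\mathrm{abs}:\mathrm{varsort}\to(\mathbf{Dt}\to\mathbf{Dt})\to\mathbf{Da}$, and let $\mathbf{val}=\mathrm{varsort}\to\mathrm{var}\to\mathbf{Dt}$. There exist $\mathrm{sem}:\mathrm{term}\to\mathbf{val}\to\mathbf{Dt}$ and $\mathrm{semAbs}:\mathrm{abs}\to\mathbf{val}\to\mathbf{Da}$ such that for all $\rho:\mathbf{val}$, all good terms $X,Y$, and all $inp,binp$ with good values and domains of cardinality $<|\mathrm{var}|$: (i) $\mathrm{sem}(\mathrm{Var}\;xs\;x)\,\rho=\rho\;xs\;x$; (ii) $\mathrm{sem}(\mathrm{Op}\;\delta\;inp\;binp)\,\rho=\mathrm{op}\;\delta\;(\uparrow(\lambda X.\,\mathrm{sem}\;X\;\rho)\;inp)\;(\uparrow(\lambda A.\,\mathrm{semAbs}\;A\;\rho)\;binp)$; (iii) $\mathrm{semAbs}(\mathrm{Abs}\;xs\;x\;X)\,\rho=\mathrm{abs}\;xs\;(\lambda d.\,\mathrm{sem}\;X\;(\rho[(xs,x)\leftarrow d]))$; (iv) $\mathrm{sem}(X[Y/y]_{ys})\,\rho=\mathrm{sem}\;X\;(\rho[(ys,y)\leftarrow\mathrm{sem}\;Y\;\rho])$; (v) if $\mathrm{fresh}\;xs\;x\;X$ then for all $\rho,\rho'$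 that agree everywhere except possibly at $(xs,x)$, $\mathrm{sem}\;X\;\rho=\mathrm{sem}\;X\;\rho'$.
   Context: Fix types $\mathrm{var}$, $\mathrm{varsort}$, $\mathrm{index}$, $\mathrm{bindex}$, $\mathrm{opsym}$, with $|\mathrm{var}|$ an infinite regular cardinal. $(\alpha,\beta)\,\mathrm{input}$ = partial functions $\alpha\to\beta\;\mathrm{option}$; $\uparrow g\;inp$ applies $g$ to all defined values of $inp$. Terms ($\mathrm{term}$) and abstractions ($\mathrm{abs}$) are alpha-equivalence classes of the free datatypes $\mathrm{qterm}=\mathrm{qVar}\;\mathrm{varsort}\;\mathrm{var}\mid\mathrm{qOp}\;\mathrm{opsym}\;((\mathrm{index},\mathrm{qterm})\mathrm{input})\;((\mathrm{bindex},\mathrm{qabs})\mathrm{input})$, $\mathrm{qabs}=\mathrm{qAbs}\;\mathrm{varsort}\;\mathrm{var}\;\mathrm{qterm}$ ($x$ of varsort $xs$ bound in $X$ in $\mathrm{qAbs}\;xs\;x\;X$), with lifted constructors $\mathrm{Var},\mathrm{Op},\mathrm{Abs}$; $\mathrm{fresh}\;xs\;x\;X$: the variable $x$ of varsort $xs$ does not occur free in $X$; $X[Y/y]_{ys}$: capture-avoiding substitution of $Y$ for free occurrences of the variable $y$ of varsort $ys$. Good: every $\mathrm{Op}$ node has inputs with domains of cardinality $<|\mathrm{var}|$. $\rho[(xs,x)\leftarrow d]$ is the valuation equal to $\rho$ except that it maps $xs,x$ to $d$. *)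

(* Defs.v *)
(* Syntax with bindings (Popescu-Gunter style), infinitary
   operations, terms = alpha-equivalence classes of quasi-terms. *)
From Stdlib Require Import Classical ClassicalEpsilon Relations.
Set Implicit Arguments.

Definition decP (P : Prop) : {P} + {~ P} := excluded_middle_informative P.

Definition input (A B : Type) := A -> option B.

Definition lift {A B C : Type} (g : B -> C) (inp : input A B) : input A C :=
  fun i => match inp i with Some b => Some (g b) | None => None end.

Definition card_le (A B : Type) : Prop := exists f : A -> B, forall a a', f a = f a' -> a = a'.
Definition card_lt (A B : Type) : Prop := card_le A B /\ ~ card_le B A.

Definition infinite_regular (var : Type) : Prop :=
  card_le nat var /\
  forall (I : Type) (F : I -> Type),
    card_lt I var -> (forall i, card_lt (F i) var) -> card_lt {i : I & F i} var.

Definition dom {A B : Type} (inp : input A B) := { a : A | inp a <> None }.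

Definition pickVar {var : Type} (P : var -> Prop) (d : var) : var :=
  match decP (exists z, P z) with
  | left H => proj1_sig (constructive_indefinite_description P H)
  | right _ => d
  end.

Section Syntax.
Context (var varsort index bindex opsym : Type).

Inductive qterm : Type :=
| qVar : varsort -> var -> qterm
| qOp : opsym -> input index qterm -> input bindex qabs -> qterm
with qabs : Type :=
| qAbs : varsort -> var -> qterm -> qabs.

Fixpoint qFree (xs : varsort) (x : var) (X : qterm) {struct X} : Prop :=
  match X with
  | qVar ys y => ys = xs /\ y = x
  | qOp _ inp binp =>
      (exists i, match inp i with Some Y => qFree xs x Y | None => False end) \/
      (exists i, match binp i with Some A => qFreeAbs xs x A | None => False end)
  end
with qFreeAbs (xs : varsort) (x : var) (A : qabs) {struct A} : Prop :=
  match A with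
  | qAbs ys y Y => ~ (ys = xs /\ y = x) /\ qFree xs x Y
  end.

Fixpoint qGood (X : qterm) : Prop :=
  match X with
  | qVar _ _ => True
  | qOp _ inp binp =>
      card_lt (dom inp) var /\ card_lt (dom binp) var /\
      (forall i, match inp i with Some Y => qGood Y | None => True end) /\
      (forall i, match binp i with Some A => qGoodAbs A | None => True end)
  end
with qGoodAbs (A : qabs) : Prop :=
  match A with qAbs _ _ Y => qGood Y end.

Definition sw (xs : varsort) (x y : var) (zs : varsort) (z : var) : var :=
  if decP (zs = xs) then
    (if decP (z = x) then y else if decP (z = y) then x else z)
  else z.

Fixpoint qSwap (xs : varsort) (x y : var) (X : qterm) {struct X} : qterm :=
  match X with
  | qVar zs z => qVar zs (sw xs x y zs z)
  | qOp d inp binp =>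
      qOp d (fun i => match inp i with Some Y => Some (qSwap xs x y Y) | None => None end)
            (fun i => match binp i with Some A => Some (qSwapAbs xs x y A) | None => None end)
  end
with qSwapAbs (xs : varsort) (x y : var) (A : qabs) {struct A} : qabs :=
  match A with
  | qAbs zs z Y => qAbs zs (sw xs x y zs z) (qSwap xs x y Y)
  end.

Inductive alpha : qterm -> qterm -> Prop :=
| alphaVar : forall xs x, alpha (qVar xs x) (qVar xs x)
| alphaOp : forall d inp inp' binp binp',
    (forall i, (inp i = None /\ inp' i = None) \/
               (exists X X', inp i = Some X /\ inp' i = Some X' /\ alpha X X')) ->
    (forall i, (binp i = None /\ binp' i = None) \/
               (exists A A', binp i = Some A /\ binp' i = Some A' /\ alphaAbs A A')) ->
    alpha (qOp d inp binp) (qOp d inp' binp')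
with alphaAbs : qabs -> qabs -> Prop :=
| alphaAbs_intro : forall xs x x' X X' y,
    y <> x -> y <> x' -> ~ qFree xs y X -> ~ qFree xs y X' ->
    alpha (qSwap xs y x X) (qSwap xs y x' X') ->
    alphaAbs (qAbs xs x X) (qAbs xs x' X').

(* the equivalence generated by alpha (coincides with alpha on good quasi-terms) *)
Definition alphaEq : relation qterm := clos_refl_sym_trans qterm alpha.
Definition alphaAbsEq : relation qabs := clos_refl_sym_trans qabs alphaAbs.

Definition term : Type := { P : qterm -> Prop | exists X, P = alphaEq X }.
Definition abstr : Type := { P : qabs -> Prop | exists A, P = alphaAbsEq A }.

Definition cls (X : qterm) : term := exist _ (alphaEq X) (ex_intro _ X eq_refl).
Definition clsAbs (A : qabs) : abstr := exist _ (alphaAbsEq A) (ex_intro _ A eq_refl).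

Definition rep (T : term) : qterm :=
  proj1_sig (constructive_indefinite_description _ (proj2_sig T)).
Definition repAbs (T : abstr) : qabs :=
  proj1_sig (constructive_indefinite_description _ (proj2_sig T)).

Definition Var (xs : varsort) (x : var) : term := cls (qVar xs x).
Definition Op (d : opsym) (inp : input index term) (binp : input bindex abstr) : term :=
  cls (qOp d (lift rep inp) (lift repAbs binp)).
Definition Abs (xs : varsort) (x : var) (X : term) : abstr := clsAbs (qAbs xs x (rep X)).

Definition good (X : term) : Prop := qGood (rep X).
Definition goodAbs (A : abstr) : Prop := qGoodAbs (repAbs A).
Definition fresh (xs : varsort) (x : var) (X : term) : Prop := ~ qFree xs x (rep X).

(* capture-avoiding (parallel) substitution on quasi-terms: when passing a
   binder (xs,x), it is renamed to a variable z of sort xs that is not free in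
   the substituted terms f ys y, for (ys,y) free in the abstraction. *)
Definition updEnv (f : varsort -> var -> qterm) (xs : varsort) (x : var) (Y : qterm) :=
  fun ys y => if decP (ys = xs /\ y = x) then Y else f ys y.

Fixpoint qPsubst (f : varsort -> var -> qterm) (X : qterm) {struct X} : qterm :=
  match X with
  | qVar ys y => f ys y
  | qOp d inp binp =>
      qOp d (fun i => match inp i with Some Y => Some (qPsubst f Y) | None => None end)
            (fun i => match binp i with Some A => Some (qPsubstAbs f A) | None => None end)
  end
with qPsubstAbs (f : varsort -> var -> qterm) (A : qabs) {struct A} : qabs :=
  match A with
  | qAbs xs x Y =>
      let z := pickVar (fun z => forall ys y, qFreeAbs ys y (qAbs xs x Y) ->
                                   ~ qFree xs z (f ys y)) x in
      qAbs xs z (qPsubst (updEnv f xs x (qVar xs z)) Y)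
  end.

Definition qSubst (X Y : qterm) (ys : varsort) (y : var) : qterm :=
  qPsubst (updEnv qVar ys y Y) X.
Definition subst (X Y : term) (ys : varsort) (y : var) : term :=
  cls (qSubst (rep X) (rep Y) ys y).

End Syntax.

Definition upd {varsort var D : Type} (rho : varsort -> var -> D) (xs : varsort) (x : var) (d : D) :
  varsort -> var -> D :=
  fun ys y => if decP (ys = xs /\ y = x) then d else rho ys y.

(* Main.v *)
Require Import Defs.
From Stdlib Require Import Classical ClassicalEpsilon FunctionalExtensionality ProofIrrelevance Relations.
Set Implicit Arguments.

Lemma card_le_trans A B C : card_le A B -> card_le B C -> card_le A C.
Proof. intros [f Hf] [g Hg]. exists (fun a => g (f a)). auto. Qed.

Lemma card_lt_le_trans A B C : card_le A B -> card_lt B C -> card_lt A C.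
Proof.
  intros H [H1 H2]. split. eapply card_le_trans; eauto.
  intro H3. apply H2. eapply card_le_trans; eauto.
Qed.

Section Small.
Context (var : Type) (Hv : infinite_regular var).
Definition small (P : var -> Prop) := card_lt {z : var | P z} var.

Lemma sig_inj (P : var -> Prop) (a b : {z | P z}) : proj1_sig a = proj1_sig b -> a = b.
Proof. destruct a, b; simpl; intros ->. f_equal. apply proof_irrelevance. Qed.

Lemma inj_via (P : var -> Prop) (B : Type) (f : {z|P z} -> B) (k : B -> var) :
  (forall a, k (f a) = proj1_sig a) -> card_le {z | P z} B.
Proof. intros H. exists f. intros a b E. apply sig_inj. rewrite <- (H a), E, H. reflexivity. Qed.

Lemma small_sub (P Q : var -> Prop) : (forall z, P z -> Q z) -> small Q -> small P.
Proof.
  intros H HQ. apply card_lt_le_trans with {z | Q z}; auto.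
  apply (@inj_via P {z | Q z} (fun a => exist (fun z => Q z) (proj1_sig a) (H _ (proj2_sig a))) (@proj1_sig _ _)).
  reflexivity.
Qed.

Lemma small_single a : small (fun z => z = a).
Proof.
  destruct Hv as [[g Hg] _]. split.
  - exists (@proj1_sig _ _). apply sig_inj.
  - intros [h Hh].
    assert (E : h (g 0) = h (g 1)) by
      (apply sig_inj; destruct (h (g 0)), (h (g 1)); simpl; congruence).
    apply Hh, Hg in E. discriminate.
Qed.

Lemma bool_lt : card_lt bool var.
Proof.
  destruct Hv as [[g Hg] _]. split.
  - exists (fun b : bool => g (if b then 0 else 1)). intros [|] [|] E; auto; apply Hg in E; discriminate.
  - intros [h Hh].
    assert (H : forall m n, h (g m) = h (g n) -> m = n) by (intros; apply Hg, Hh; auto).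
    destruct (h (g 0)) eqn:E0, (h (g 1)) eqn:E1, (h (g 2)) eqn:E2;
    first [ assert (0=1) by (apply H; congruence)
          | assert (0=2) by (apply H; congruence)
          | assert (1=2) by (apply H; congruence)]; discriminate.
Qed.

Lemma small_union (A B : var -> Prop) : small A -> small B -> small (fun z => A z \/ B z).
Proof.
  intros HA HB.
  assert (HS := proj2 Hv bool (fun b => {z | if b then A z else B z}) bool_lt
                  ltac:(intros [|]; assumption)).
  eapply card_lt_le_trans; [|exact HS].
  apply (@inj_via _ _
    (fun zz : {z | A z \/ B z} =>
       match decP (A (proj1_sig zz)) with
       | left a => existT (fun b : bool => {z | if b then A z else B z}) true
                     (exist (fun z => A z) (proj1_sig zz) a)
       | right na => existT (fun b : bool => {z | if b then A z else B z}) false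
                     (exist (fun z => B z) (proj1_sig zz)
                        (match proj2_sig zz with or_introl a => False_ind _ (na a)
                                             | or_intror b => b end))
       end)
    (fun s => proj1_sig (projT2 s))).
  intros a. destruct decP; reflexivity.
Qed.

Lemma small_bigunion (I : Type) (P : I -> var -> Prop) :
  card_lt I var -> (forall i, small (P i)) -> small (fun z => exists i, P i z).
Proof.
  intros HI HP.
  assert (HS := proj2 Hv I (fun i => {z | P i z}) HI HP).
  eapply card_lt_le_trans; [|exact HS].
  apply (@inj_via _ _
    (fun zz : {z | exists i, P i z} =>
       let e := constructive_indefinite_description _ (proj2_sig zz) in
       existT (fun i => {z | P i z}) (proj1_sig e) (exist _ (proj1_sig zz) (proj2_sig e)))
    (fun s => proj1_sig (projT2 s))).
  reflexivity.
Qed.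

Lemma small_nonfull P : small P -> exists z, ~ P z.
Proof.
  intros [_ H]. apply NNPP. intro N. apply H.
  assert (F : forall z, P z) by (intro z; apply NNPP; intro; apply N; eauto).
  exists (fun z => exist _ z (F z)). intros a b E. apply (f_equal (@proj1_sig _ _)) in E. exact E.
Qed.
End Small.

Lemma noneSome T (y : T) : None = Some y -> False.
Proof. discriminate. Qed.

Section Sem.
Context (var varsort index bindex opsym : Type) (Dt Da : Type)
  (op : opsym -> input index Dt -> input bindex Da -> Dt)
  (abs : varsort -> (Dt -> Dt) -> Da).
Notation QT := (qterm var varsort index bindex opsym).
Notation QA := (qabs var varsort index bindex opsym).
Notation val := (varsort -> var -> Dt).
Notation qV := (qVar index bindex opsym).

Fixpoint qsem (X : QT) (rho : val) {struct X} : Dt :=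
  match X with
  | qVar _ _ _ xs x => rho xs x
  | qOp d inp binp =>
      op d (fun i => match inp i with Some Y => Some (qsem Y rho) | None => None end)
           (fun i => match binp i with Some A => Some (qsemA A rho) | None => None end)
  end
with qsemA (A : QA) (rho : val) {struct A} : Da :=
  match A with qAbs xs x Y => abs xs (fun d => qsem Y (upd rho xs x d)) end.

Section Ind.
Variables (P : QT -> Prop) (Q : QA -> Prop).
Hypotheses (HV : forall xs x, P (qV xs x))
  (HO : forall d inp binp, (forall i Y, inp i = Some Y -> P Y) ->
          (forall i A, binp i = Some A -> Q A) -> P (qOp d inp binp))
  (HA : forall xs x Y, P Y -> Q (qAbs xs x Y)).

Fixpoint qt_ind (X : QT) : P X :=
  match X with
  | qVar _ _ _ xs x => HV xs x
  | qOp d inp binp => HO d inp binp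
      (fun i => match inp i as o return forall Y, o = Some Y -> P Y with
         | Some Y' => fun Y e => eq_ind Y' P (qt_ind Y') Y
                        (f_equal (fun o => match o with Some y => y | None => Y' end) e)
         | None => fun Y e => False_ind _ (noneSome e) end)
      (fun i => match binp i as o return forall A, o = Some A -> Q A with
         | Some A' => fun A e => eq_ind A' Q (qa_ind A') A
                        (f_equal (fun o => match o with Some y => y | None => A' end) e)
         | None => fun A e => False_ind _ (noneSome e) end)
  end
with qa_ind (A : QA) : Q A :=
  match A with qAbs xs x Y => HA xs x (qt_ind Y) end.
End Ind.

Lemma sw_inj (xs : varsort) (x y : var) zs a b : sw xs x y zs a = sw xs x y zs b -> a = b.
Proof.
  unfold sw. destruct (decP (zs = xs)); [|auto].
  destruct (decP (a = x)), (decP (a = y)), (decP (b = x)), (decP (b = y)); congruence.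
Qed.

Lemma swap_sem xs x y :
  (forall X rho, qsem (qSwap xs x y X) rho = qsem X (fun zs z => rho zs (sw xs x y zs z))) /\
  (forall A rho, qsemA (qSwapAbs xs x y A) rho = qsemA A (fun zs z => rho zs (sw xs x y zs z))).
Proof.
  split; [apply (qt_ind (fun X => forall rho, _) (fun A => forall rho, qsemA (qSwapAbs xs x y A) rho = qsemA A (fun zs z => rho zs (sw xs x y zs z))))
        | apply (qa_ind (fun X => forall rho, qsem (qSwap xs x y X) rho = qsem X (fun zs z => rho zs (sw xs x y zs z))) (fun A => forall rho, _))].
  all: try (intros; reflexivity).
  all: try (intros d inp binp IH1 IH2 rho; simpl; f_equal; apply functional_extensionality; intro i;
    [destruct (inp i) eqn:E; [f_equal; apply (IH1 i _ E) | reflexivity]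
    |destruct (binp i) eqn:E; [f_equal; apply (IH2 i _ E) | reflexivity]]).
  all: intros zs z Y IH rho; simpl; f_equal; apply functional_extensionality; intro d;
    rewrite IH; f_equal; apply functional_extensionality; intro ws;
    apply functional_extensionality; intro w; unfold upd;
    destruct (decP (ws = zs /\ sw xs x y ws w = sw xs x y zs z)) as [[e E]|n];
    destruct (decP (ws = zs /\ w = z)) as [[e' e'']|n']; auto;
    [ exfalso; apply n'; subst; split; [reflexivity| exact (sw_inj _ _ _ _ _ _ E)]
    | exfalso; apply n; subst; auto].
Qed.

Lemma agree :
  (forall X rho rho', (forall zs z, qFree zs z X -> rho zs z = rho' zs z) -> qsem X rho = qsem X rho') /\
  (forall A rho rho', (forall zs z, qFreeAbs zs z A -> rho zs z = rho' zs z) -> qsemA A rho = qsemA A rho').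
Proof.
  set (P := fun X : QT => forall rho rho', (forall zs z, qFree zs z X -> rho zs z = rho' zs z) -> qsem X rho = qsem X rho').
  set (Q := fun A : QA => forall rho rho', (forall zs z, qFreeAbs zs z A -> rho zs z = rho' zs z) -> qsemA A rho = qsemA A rho').
  assert (HV : forall xs x, P (qV xs x)).
  { intros xs x rho rho' H. apply H. simpl. auto. }
  assert (HO : forall d inp binp, (forall i Y, inp i = Some Y -> P Y) ->
          (forall i A, binp i = Some A -> Q A) -> P (qOp d inp binp)).
  { intros d inp binp IH1 IH2 rho rho' H. simpl. f_equal; apply functional_extensionality; intro i.
    - destruct (inp i) eqn:E; [|reflexivity]. f_equal. apply (IH1 i _ E).
      intros zs z Hf. apply H. simpl. left. exists i. rewrite E. exact Hf.
    - destruct (binp i) eqn:E; [|reflexivity]. f_equal. apply (IH2 i _ E).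
      intros zs z Hf. apply H. simpl. right. exists i. rewrite E. exact Hf. }
  assert (HA : forall xs x Y, P Y -> Q (qAbs xs x Y)).
  { intros xs x Y IH rho rho' H. simpl. f_equal. apply functional_extensionality; intro d.
    apply IH. intros ws w Hf. unfold upd. destruct decP as [_|n]; [reflexivity|].
    apply H. simpl. split; [|exact Hf]. intros [-> ->]. apply n; auto. }
  split; [exact (qt_ind P Q HV HO HA) | exact (qa_ind P Q HV HO HA)].
Qed.

Lemma upd_sw (rho : val) xs x y d zs z : ~ (zs = xs /\ z = y) ->
  upd rho xs x d zs z = upd rho xs y d zs (sw xs y x zs z).
Proof.
  intros Hn. unfold upd, sw. destruct (decP (zs = xs)) as [->|n].
  - destruct (decP (z = y)) as [->|ny]; [exfalso; auto|].
    destruct (decP (z = x)) as [->|nx].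
    + destruct (decP (xs = xs /\ x = x)) as [_|c]; [|exfalso; auto].
      destruct (decP (xs = xs /\ y = y)) as [_|c]; [reflexivity|exfalso; auto].
    + destruct (decP (xs = xs /\ z = x)) as [[_ c]|_]; [exfalso; auto|].
      destruct (decP (xs = xs /\ z = y)) as [[_ c]|_]; [exfalso; auto|reflexivity].
  - destruct (decP (zs = xs /\ z = x)) as [[c _]|_]; [exfalso; auto|].
    destruct (decP (zs = xs /\ z = y)) as [[c _]|_]; [exfalso; auto|reflexivity].
Qed.

Fixpoint alpha_sem (X X' : QT) (H : alpha X X') {struct H} : forall rho, qsem X rho = qsem X' rho
with alphaA_sem (A A' : QA) (H : alphaAbs A A') {struct H} : forall rho, qsemA A rho = qsemA A' rho.
Proof.
  - destruct H as [xs x | d inp inp' binp binp' H1 H2].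
    + reflexivity.
    + intro rho. simpl. f_equal; apply functional_extensionality; intro i.
      * destruct (H1 i) as [[E1 E2] | [Y [Y' [E1 [E2 HY]]]]]; rewrite E1, E2; [reflexivity|].
        f_equal. exact (alpha_sem _ _ HY rho).
      * destruct (H2 i) as [[E1 E2] | [Y [Y' [E1 [E2 HY]]]]]; rewrite E1, E2; [reflexivity|].
        f_equal. exact (alphaA_sem _ _ HY rho).
  - destruct H as [xs x x' X X' y ny1 ny2 fy1 fy2 Ha].
    intro rho. simpl. f_equal. apply functional_extensionality; intro d.
    pose proof (alpha_sem _ _ Ha (upd rho xs y d)) as IH.
    rewrite !(proj1 (swap_sem _ _ _)) in IH.
    transitivity (qsem X (fun zs z => upd rho xs y d zs (sw xs y x zs z))).
    { apply (proj1 agree). intros zs z Hf. apply upd_sw. intros [-> ->]. exact (fy1 Hf). }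
    rewrite IH. symmetry.
    apply (proj1 agree). intros zs z Hf. apply upd_sw. intros [-> ->]. exact (fy2 Hf).
Qed.

Lemma alphaEq_sem X Y : alphaEq X Y -> forall rho, qsem X rho = qsem Y rho.
Proof.
  induction 1; intro rho.
  - apply alpha_sem; assumption.
  - reflexivity.
  - symmetry; auto.
  - etransitivity; eauto.
Qed.

Lemma alphaAbsEq_sem A B : alphaAbsEq A B -> forall rho, qsemA A rho = qsemA B rho.
Proof.
  induction 1; intro rho.
  - apply alphaA_sem; assumption.
  - reflexivity.
  - symmetry; auto.
  - etransitivity; eauto.
Qed.

Lemma rep_cls (Z : QT) : alphaEq (rep (cls Z)) Z.
Proof.
  unfold rep, cls; simpl.
  destruct (constructive_indefinite_description _ _) as [W HW]; simpl.
  assert (H : alphaEq Z Z) by apply rst_refl. rewrite HW in H. exact H.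
Qed.

Lemma repAbs_cls (Z : QA) : alphaAbsEq (repAbs (clsAbs Z)) Z.
Proof.
  unfold repAbs, clsAbs; simpl.
  destruct (constructive_indefinite_description _ _) as [W HW]; simpl.
  assert (H : alphaAbsEq Z Z) by apply rst_refl. rewrite HW in H. exact H.
Qed.

Context (Hv : infinite_regular var).

Lemma fv_small :
  (forall X : QT, qGood X -> forall xs, small (fun z => qFree xs z X)) /\
  (forall A : QA, qGoodAbs A -> forall xs, small (fun z => qFreeAbs xs z A)).
Proof.
  set (P := fun X : QT => qGood X -> forall xs, small (fun z => qFree xs z X)).
  set (Q := fun A : QA => qGoodAbs A -> forall xs, small (fun z => qFreeAbs xs z A)).
  assert (HV : forall xs x, P (qV xs x)).
  { intros xs x _ ys. apply small_sub with (fun z => z = x). intros z [_ ->]; reflexivity.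
    apply small_single; assumption. }
  assert (HO : forall d inp binp, (forall i Y, inp i = Some Y -> P Y) ->
          (forall i A, binp i = Some A -> Q A) -> P (qOp d inp binp)).
  { intros d inp binp IH1 IH2 [C1 [C2 [G1 G2]]] xs.
    apply small_sub with (fun z =>
      (exists i : dom inp, match inp (proj1_sig i) with Some Y => qFree xs z Y | None => False end) \/
      (exists i : dom binp, match binp (proj1_sig i) with Some A => qFreeAbs xs z A | None => False end)).
    - intros z [[i Hi]|[i Hi]].
      + left. assert (E : inp i <> None) by (destruct (inp i); [discriminate | contradiction]).
        exists (exist _ i E). exact Hi.
      + right. assert (E : binp i <> None) by (destruct (binp i); [discriminate | contradiction]).
        exists (exist _ i E). exact Hi.
    - apply small_union; [assumption| |]; apply small_bigunion; try assumption.
      + intros [i Ei]; simpl. specialize (G1 i). destruct (inp i) eqn:E; [|contradiction].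
        apply (IH1 i _ E G1).
      + intros [i Ei]; simpl. specialize (G2 i). destruct (binp i) eqn:E; [|contradiction].
        apply (IH2 i _ E G2). }
  assert (HA : forall xs x Y, P Y -> Q (qAbs xs x Y)).
  { intros xs x Y IH G ys. apply small_sub with (fun z => qFree ys z Y).
    intros z [_ H]; exact H. apply IH; exact G. }
  split; [exact (qt_ind P Q HV HO HA) | exact (qa_ind P Q HV HO HA)].
Qed.

Definition moved (f : varsort -> var -> QT) xs z :=
  exists ys y, f ys y <> qV ys y /\ qFree xs z (f ys y).
Definition Inv f := forall xs, small (moved f xs).

Lemma pickVar_spec (Pr : var -> Prop) d : (exists z, Pr z) -> Pr (pickVar Pr d).
Proof. intro H. unfold pickVar. destruct decP; [apply proj2_sig | contradiction]. Qed.

Lemma subst_sem :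
  (forall X : QT, qGood X -> forall f, Inv f -> forall rho,
      qsem (qPsubst f X) rho = qsem X (fun zs z => qsem (f zs z) rho)) /\
  (forall A : QA, qGoodAbs A -> forall f, Inv f -> forall rho,
      qsemA (qPsubstAbs f A) rho = qsemA A (fun zs z => qsem (f zs z) rho)).
Proof.
  set (P := fun X : QT => qGood X -> forall f, Inv f -> forall rho,
      qsem (qPsubst f X) rho = qsem X (fun zs z => qsem (f zs z) rho)).
  set (Q := fun A : QA => qGoodAbs A -> forall f, Inv f -> forall rho,
      qsemA (qPsubstAbs f A) rho = qsemA A (fun zs z => qsem (f zs z) rho)).
  assert (HV : forall xs x, P (qV xs x)).
  { intros xs x _ f _ rho. reflexivity. }
  assert (HO : forall d inp binp, (forall i Y, inp i = Some Y -> P Y) ->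
          (forall i A, binp i = Some A -> Q A) -> P (qOp d inp binp)).
  { intros d inp binp IH1 IH2 [C1 [C2 [G1 G2]]] f Hf rho. simpl.
    f_equal; apply functional_extensionality; intro i.
    - specialize (G1 i). destruct (inp i) eqn:E; [|reflexivity]. f_equal. apply (IH1 i _ E G1 f Hf).
    - specialize (G2 i). destruct (binp i) eqn:E; [|reflexivity]. f_equal. apply (IH2 i _ E G2 f Hf). }
  assert (HA : forall xs x Y, P Y -> Q (qAbs xs x Y)).
  { intros xs x Y IH G f Hf rho. cbn [qPsubstAbs qsemA].
    set (Pr := fun z => forall ys y, qFreeAbs ys y (qAbs xs x Y) -> ~ qFree xs z (f ys y)).
    assert (Hz : Pr (pickVar Pr x)).
    { apply pickVar_spec.
      destruct (small_nonfull (small_union Hv ((proj1 fv_small) Y G xs) (Hf xs))) as [z0 Hz0].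
      exists z0. intros ys y HfA Hfz.
      destruct (classic (f ys y = qV ys y)) as [E|E].
      - rewrite E in Hfz. simpl in Hfz. destruct Hfz as [-> ->].
        apply Hz0. left. exact (proj2 HfA).
      - apply Hz0. right. exists ys, y. auto. }
    set (z := pickVar Pr x) in *. clearbody z.
    assert (Hf' : Inv (updEnv f xs x (qV xs z))).
    { intro xs'. apply small_sub with (fun z' => moved f xs' z' \/ z' = z).
      - intros z' [ys [y [Ne Hfr]]]. revert Ne Hfr. unfold updEnv.
        destruct (decP (ys = xs /\ y = x)) as [_|n].
        + intros _ Hfr. simpl in Hfr. right. destruct Hfr as [_ ->]. reflexivity.
        + intros Ne Hfr. left. exists ys, y. auto.
      - apply small_union; [assumption | exact (Hf xs') | apply small_single; assumption]. }
    f_equal. apply functional_extensionality; intro d.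
    rewrite (IH G _ Hf'). apply (proj1 agree). intros ws w Hfw. unfold updEnv, upd.
    destruct (decP (ws = xs /\ w = x)) as [_|n].
    - simpl. unfold upd. destruct decP as [_|c]; [reflexivity | exfalso; auto].
    - apply (proj1 agree). intros vs v Hfv. unfold upd.
      destruct (decP (vs = xs /\ v = z)) as [[-> ->]|_]; [|reflexivity].
      exfalso. apply (Hz ws w); [|exact Hfv].
      split; [|exact Hfw]. intros [-> ->]. apply n; auto. }
  split; [exact (qt_ind P Q HV HO HA) | exact (qa_ind P Q HV HO HA)].
Qed.

End Sem.

Theorem theorem3 (var varsort index bindex opsym : Type)
  (Hvar : infinite_regular var)
  (Dt Da : Type)
  (op : opsym -> input index Dt -> input bindex Da -> Dt)
  (abs : varsort -> (Dt -> Dt) -> Da) :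
  exists (sem : term var varsort index bindex opsym -> (varsort -> var -> Dt) -> Dt)
         (semAbs : abstr var varsort index bindex opsym -> (varsort -> var -> Dt) -> Da),
    forall rho : varsort -> var -> Dt,
      (* (i) *)
      (forall xs x, sem (Var index bindex opsym xs x) rho = rho xs x) /\
      (* (ii) *)
      (forall (delta : opsym) (inp : input index (term var varsort index bindex opsym))
              (binp : input bindex (abstr var varsort index bindex opsym)),
          (forall i X, inp i = Some X -> good X) ->
          (forall i A, binp i = Some A -> goodAbs A) ->
          card_lt (dom inp) var -> card_lt (dom binp) var ->
          sem (Op delta inp binp) rho =
          op delta (lift (fun X => sem X rho) inp) (lift (fun A => semAbs A rho) binp)) /\
      (* (iii) *)
      (forall xs x X, good X ->
          semAbs (Abs xs x X) rho = abs xs (fun d => sem X (upd rho xs x d))) /\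
      (* (iv) *)
      (forall X Y ys y, good X -> good Y ->
          sem (subst X Y ys y) rho = sem X (upd rho ys y (sem Y rho))) /\
      (* (v) *)
      (forall xs x X, good X -> fresh xs x X ->
          forall rho' : varsort -> var -> Dt,
            (forall ys y, ~ (ys = xs /\ y = x) -> rho ys y = rho' ys y) ->
            sem X rho = sem X rho').
Proof.
  exists (fun T rho => qsem op abs (rep T) rho), (fun A rho => qsemA op abs (repAbs A) rho).
  intro rho. split; [|split; [|split; [|split]]].
  - intros xs x. unfold Var. rewrite (alphaEq_sem op abs (rep_cls _)). reflexivity.
  - intros delta inp binp _ _ _ _. unfold Op. rewrite (alphaEq_sem op abs (rep_cls _)). simpl.
    f_equal; apply functional_extensionality; intro i; unfold lift.
    + destruct (inp i); reflexivity.
    + destruct (binp i); reflexivity.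
  - intros xs x X _. unfold Abs. rewrite (alphaAbsEq_sem op abs (repAbs_cls _)). reflexivity.
  - intros X Y ys y GX GY. unfold subst. rewrite (alphaEq_sem op abs (rep_cls _)).
    unfold qSubst. rewrite (proj1 (subst_sem op abs Hvar) _ GX).
    + f_equal. apply functional_extensionality; intro zs; apply functional_extensionality; intro z.
      unfold updEnv, upd. destruct decP; reflexivity.
    + intro xs. apply small_sub with (fun z => qFree xs z (rep Y)).
      * intros z [ys' [y' [Ne Hfr]]]. revert Ne Hfr. unfold updEnv.
        destruct decP as [_|n]; [intros _ H; exact H | intros Ne; exfalso; apply Ne; reflexivity].
      * apply (proj1 (@fv_small _ _ index bindex opsym Hvar)). exact GY.
  - intros xs x X _ Hfr rho' H. apply (proj1 (@agree _ _ _ _ _ _ _ op abs)).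
    intros zs z Hf. apply H. intros [-> ->]. exact (Hfr Hf).
Qed.
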